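(* Let $G=(V,E)$ be a control flow graph and $p$ a predicate node. If $p$ has at least two successors in $A_p$, then $\{p\}$ is a trivial strongly connected component of $A_p$, and all other nodes of $A_p$ form a single strongly connected component whose induced subgraph is a cycle.
   Context: A control flow graph (CFG) is a finite directed graph $G=(V,E)$ in which every node has at most two outgoing edges; nodes with exactly two outgoing edges are predicate nodes. A path from $n_1$ is a nonempty finite or infinite sequence of nodes with each adjacent pair an edge; it is maximal if it is infinite or its last node has no successor. $V_p$ is the set of nodes occurring on all maximal paths from $p$ in $G$. For $V'\subseteq V$, a $V'$-interval from $x$ to $y$ is a finite path $n_1\ldots n_k$ in $G$ with $k\ge 2$, $n_1=x\in V'$, $n_k=y\in V'$, and $n_i\notin V'$ for $1<i<k$. $A_p$ is the directed graph with node set $V_p$ and an edge $(x,y)$ iff there is a $V_p$-interval from $x$ to $y$ in $G$. An SCC is trivial if its induced subgraph has no edge. A graph is a cycle if it is isomorphic to a graph with nodes $n_1,\ldots,n_k$ ($k>0$) and edges exactly $(n_1,n_2),\ldots,(n_{k-1},n_k),(n_k,n_1)$. *)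

(* Defs.v *)
From mathcomp Require Import all_boot.
From Stdlib Require Import Relations.
Set Implicit Arguments. Unset Strict Implicit. Unset Printing Implicit Defensive.

Section CFG.
Variables (T : finType) (e : rel T).

Definition cfg : Prop := forall x : T, #|[pred y | e x y]| <= 2.

Definition predicate_node (p : T) : Prop := #|[pred y | e p y]| = 2.

(* n lies on every maximal path from p: every finite path p :: s whose last
   node has no successor contains n, and every infinite path f with f 0 = p
   visits n. *)
Definition Vp (p n : T) : Prop :=
  (forall s : seq T, path e p s -> (forall y, ~~ e (last p s) y) -> n \in p :: s)
  /\ (forall f : nat -> T, f 0 = p -> (forall i, e (f i) (f i.+1)) ->
        exists i, f i = n).

Definition interval (V' : T -> Prop) (x y : T) : Prop :=
  V' x /\ V' y /\
  exists s : seq T, path e x (rcons s y) /\ (forall z, z \in s -> ~ V' z).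

Definition Ap_edge (p x y : T) : Prop := interval (Vp p) x y.

Definition Ap_reach (p : T) : T -> T -> Prop := clos_refl_trans T (Ap_edge p).

Definition is_SCC (p : T) (C : T -> Prop) : Prop :=
  (exists x, C x) /\
  (forall x, C x -> Vp p x) /\
  (forall x y, C x -> C y -> Ap_reach p x y) /\
  (forall x y, C x -> Vp p y -> Ap_reach p x y -> Ap_reach p y x -> C y).

Definition trivial_SCC (p : T) (C : T -> Prop) : Prop :=
  is_SCC p C /\ (forall x y, C x -> C y -> ~ Ap_edge p x y).

End CFG.

Definition is_cycle (T : eqType) (C : T -> Prop) (E : T -> T -> Prop) : Prop :=
  exists s : seq T,
    0 < size s /\ uniq s /\ (forall z, C z <-> z \in s) /\
    (forall x y, C x -> C y ->
       (E x y <-> exists i, i < size s /\ x = nth x s i /\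
                            y = nth x s (i.+1 %% size s))).

(* Main.v *)
Require Import Defs.
From mathcomp Require Import all_boot.
From Stdlib Require Import Relations ClassicalEpsilon.
From mathcomp Require Import zify.
Set Implicit Arguments. Unset Strict Implicit. Unset Printing Implicit Defensive.

Definition pb (P : Prop) : bool := if excluded_middle_informative P then true else false.
Lemma pbP (P : Prop) : reflect P (pb P).
Proof. by rewrite /pb; case: excluded_middle_informative => H; constructor. Qed.

Lemma shortcut (T : eqType) (E : rel T) (p y1 y2 : T) (Tg B : pred T) :
  y1 <> y2 -> E p y1 -> E p y2 ->
  (forall y, E p y -> Tg y || B y) -> (exists z, B z) ->
  (forall q, path E p q -> q != [::] -> Tg (last p q) -> forall z, B z -> z \in q) ->
  forall q, path E p q -> q != [::] -> Tg (last p q) -> False.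
Proof.
move=> ny Ey1 Ey2 HTB [z0 Bz0] H q.
have [n] := ubnP (size q); elim: n q => [|n IH] q //.
case: q => [|a1 q'] // Hs Hq _ Hl.
have [y [ya Ey]] : exists y, y != a1 /\ E p y.
  case: (eqVneq y1 a1) => [<-|h]; last by exists y1.
  by exists y2; split=> //; apply/eqP => h; apply: ny.
case/orP: (HTB y Ey) => [Ty|By].
  case: q' Hs Hq Hl => [|b q''] Hs Hq Hl.
    have h1 := H [:: a1] Hq erefl Hl z0 Bz0.
    have Py : path E p [:: y] by rewrite /= Ey.
    have h2 := H [:: y] Py erefl Ty z0 Bz0.
    move: h1 h2; rewrite !inE => /eqP -> /eqP h; by rewrite h eqxx in ya.
  apply: (IH [:: y]) => //=; first by move: Hs => /=; lia.
  by rewrite Ey.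
have := H _ Hq erefl Hl y By; rewrite inE (negbTE ya) /= => yq.
case/splitPr: yq Hs Hq Hl => u v Hs Hq Hl.
apply: (IH (y :: v)) => //=.
- move: Hs; rewrite /= size_cat /= => Hs; lia.
- move: Hq => /= /andP [_]; rewrite cat_path => /andP [_] /= /andP [_ ->]; by rewrite Ey.
- by move: Hl; rewrite /= last_cat.
Qed.

Definition Wb (T : finType) (e : rel T) (p x : T) := pb (Vp e p x).
Definition Eb (T : finType) (e : rel T) (p x y : T) := pb (Ap_edge e p x y).

Lemma Eb_W (T : finType) (e : rel T) (p x y : T) : Eb e p x y -> Wb e p x && Wb e p y.
Proof. by move/pbP => [h1 [h2 _]]; apply/andP; split; apply/pbP. Qed.

Lemma walk_to_path (T : finType) (e : rel T) (p x : T) q :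
  path (Eb e p) x q -> exists s, [/\ path e x s, last x s = last x q, size q <= size s &
    forall z, Wb e p z -> z \in x :: s -> z \in x :: q].
Proof.
elim: q x => [|y q IH] x /=.
  by move=> _; exists [::]; split.
case/andP => /pbP [_ [_ [s0 [Hs0 Hn]]]] /IH [s [H1 H2 H3 H4]].
exists (rcons s0 y ++ s); split.
- by rewrite cat_path Hs0 last_rcons.
- by rewrite last_cat last_rcons.
- by rewrite size_cat size_rcons; lia.
move=> z Wz; rewrite in_cons mem_cat mem_rcons in_cons.
case/orP => [/eqP->|/orP [/orP [zy|zs0]|zs]].
- by rewrite mem_head.
- by rewrite (eqP zy) in_cons mem_head orbT.
- by move: (Hn z zs0); move/pbP: Wz.
- by rewrite in_cons H4 ?orbT // in_cons zs orbT.
Qed.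

Lemma periodic (T : eqType) (e : rel T) (c : T) s :
  0 < size s -> path e c s -> last c s = c ->
  exists g : nat -> T, [/\ g 0 = c, forall i, e (g i) (g i.+1) & forall i, g i \in c :: s].
Proof.
move=> k0 Hp Hl.
exists (fun n => nth c (c :: s) (n %% size s)); split.
- by rewrite mod0n.
- move=> n; have mk : n %% size s < size s by rewrite ltn_pmod.
  have E1 : n.+1 %% size s = ((n %% size s) + 1) %% size s by rewrite -addn1 modnDml.
  rewrite E1; move/(pathP c): Hp => /(_ _ mk).
  case: (ltngtP (n %% size s).+1 (size s)) => h.
  + by rewrite [(_ + 1) %% _]modn_small ?addn1.
  + by rewrite ltnS leqNgt mk in h.
  + rewrite addn1 h modnn /=; suff -> : nth c s (n %% size s) = c by [].
    have hh : (size s).-1 = n %% size s by move: (n %% size s) h => m <-.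
    by rewrite -[RHS]Hl -nth_last hh.
- move=> n; apply: mem_nth => /=; apply: ltnW; rewrite ltnS; exact: ltn_pmod.
Qed.

Lemma cat_inf (T : eqType) (e : rel T) (x : T) s (g : nat -> T) :
  path e x s -> (forall i, e (g i) (g i.+1)) -> g 0 = last x s ->
  exists f : nat -> T, [/\ f 0 = x, forall i, e (f i) (f i.+1) &
     forall i, f i \in x :: s \/ exists j, f i = g j].
Proof.
move=> Hp Hg Hl.
exists (fun n => if n <= size s then nth x (x :: s) n else g (n - size s)); split.
- by [].
- move=> n; case: (ltngtP n (size s)) => h.
  + by move/(pathP x): Hp => /(_ _ h).
  + by rewrite subSn ?(ltnW h).
  + by rewrite h subSn // subnn -last_nth -Hl.
- move=> n; case: leqP => h; last by right; eexists.
  left; apply: mem_nth => /=; by rewrite ltnS.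
Qed.

Lemma chain (T : Type) (e : rel T) (h : nat -> T) m i :
  (forall k, i <= k < i + m -> e (h k) (h k.+1)) ->
  path e (h i) (map h (iota i.+1 m)) /\ last (h i) (map h (iota i.+1 m)) = h (i + m).
Proof.
elim: m i => [|m IH] i H /=; first by rewrite addn0.
have [h1 h2] := IH i.+1 (fun k hk => H k ltac:(lia)).
rewrite h1 h2 H ?andbT; last by lia.
by split=> //; rewrite addSnnS.
Qed.

Lemma Wp (T : finType) (e : rel T) (p : T) : Wb e p p.
Proof. apply/pbP; split; first by move=> s _ _; exact: mem_head. by move=> f f0 _; exists 0. Qed.

Lemma last_W (T : finType) (e : rel T) (p x : T) q :
  Wb e p x -> path (Eb e p) x q -> Wb e p (last x q).
Proof.
elim: q x => [|y q IH] x //= Wx /andP [Exy Hq]; apply: IH Hq.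
by case/andP: (Eb_W Exy).
Qed.

Lemma firstW (T : finType) (e : rel T) (p x : T) s z :
  Wb e p x -> (forall y, ~~ Eb e p x y) -> path e x s -> z \in s -> ~~ Wb e p z.
Proof.
move=> Wx NE Hp zs; apply/negP => Wz.
have hs : has (Wb e p) s by apply/hasP; exists z.
set i := find (Wb e p) s.
have iS : i < size s by rewrite -has_find.
set y := nth x s i.
have Wy : Wb e p y by apply: nth_find.
apply: (negP (NE y)); apply/pbP; split; first by apply/pbP.
split; first by apply/pbP.
exists (take i s); split.
  rewrite -take_nth //; move: Hp; rewrite -{1}(cat_take_drop i.+1 s) cat_path.
  by case/andP.
move=> z' z'i Vz; have Wz' : Wb e p z' by apply/pbP.
have z's := mem_take z'i.
have := before_find x (index_ltn z'i); by rewrite nth_index // Wz'.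
Qed.

Lemma lasso (T : finType) (e : rel T) (p : T) q r z :
  path (Eb e p) p q -> path (Eb e p) (last p q) r -> 0 < size r ->
  last (last p q) r = last p q -> Wb e p z -> z \in p :: q ++ r.
Proof.
move=> Hq Hr r0 Hl Wz.
have [s1 [P1 L1 _ M1]] := walk_to_path Hq.
have [s2 [P2 L2 S2 M2]] := walk_to_path Hr.
have [g [g0 gE gM]] := periodic (leq_trans r0 S2) P2 (etrans L2 Hl).
have [f [f0 fE fM]] := cat_inf P1 gE (etrans g0 (esym L1)).
move/pbP: Wz => Wz'; have [_ H2] := Wz'.
have [i fi] := H2 f f0 fE.
rewrite -fi; case: (fM i) => [zs1|[j gj]].
  rewrite fi in zs1 *; have := M1 z (introT (pbP _) Wz') zs1.
  by rewrite !in_cons mem_cat => /orP [->|->] //; rewrite orbT.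
rewrite fi in gj *; move: (gM j); rewrite -gj => /(M2 z (introT (pbP _) Wz')).
rewrite in_cons => /orP [/eqP ->|zr]; last by rewrite in_cons mem_cat zr !orbT.
have := mem_last p q; rewrite !in_cons mem_cat => /orP [->//|->]; by rewrite orbT.
Qed.

Definition nxt (T : finType) (e : rel T) (x : T) := odflt x [pick y | e x y].

Lemma nxtP (T : finType) (e : rel T) (x : T) : [exists y, e x y] -> e x (nxt e x).
Proof. rewrite /nxt; case: pickP => [y -> //|H] /existsP [y]; by rewrite H. Qed.

Lemma term (T : finType) (e : rel T) (p : T) q z :
  path (Eb e p) p q -> (forall y, ~~ Eb e p (last p q) y) -> Wb e p z -> z \in p :: q.
Proof.
move=> Hq NE Wz.
set x := last p q.
have Wx : Wb e p x by apply: last_W (Wp e p) Hq.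
have xq : x \in p :: q by apply: mem_last.
have [s1 [P1 L1 _ M1]] := walk_to_path Hq.
set h := fun n => iter n (nxt e) x.
move/pbP: (Wz) => [H1 H2].
case: (classic (exists n, ~~ [exists y, e (h n) y])) => [ex|nex].
  have exb : exists n, ~~ [exists y, e (h n) y] by [].
  case: (ex_minnP exb) => n Hn Hmin.
  have hk : forall k, 0 <= k < 0 + n -> e (h k) (h k.+1).
    move=> k /andP [_ kn]; case: (boolP [exists y, e (h k) y]) => [ok|nok].
      exact: nxtP ok.
    have := Hmin k nok; lia.
  have [Pc Lc] := chain hk.
  have : z \in p :: s1 ++ map h (iota 1 n).
    apply: H1; first by rewrite cat_path P1 L1.
    move=> y; rewrite last_cat L1 Lc /=; apply/negP => hy.
    by move/negP: Hn; apply; apply/existsP; exists y.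
  rewrite in_cons mem_cat orbA => /orP [zz|zm].
    by apply: M1; rewrite // in_cons.
  by move: (firstW Wx NE Pc zm); rewrite Wz.
have all_e : forall n, e (h n) (h n.+1).
  move=> n; case: (boolP [exists y, e (h n) y]) => [ok|nok]; first exact: nxtP ok.
  by case: nex; exists n.
have [f [f0 fE fM]] := cat_inf P1 all_e (esym L1).
have [i fi] := H2 f f0 fE.
rewrite -fi; case: (fM i) => [zs1|[j gj]]; first by rewrite fi in zs1 *; apply: M1.
rewrite fi in gj *.
case: j gj => [->//|j gj].
have [Pc Lc] := chain (h := h) (e := e) (m := j.+1) (i := 0) (fun k _ => all_e k).
have zm : z \in map h (iota 1 j.+1) by rewrite gj; apply: map_f; rewrite mem_iota; lia.
by move: (firstW Wx NE Pc zm); rewrite Wz.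
Qed.

Lemma no_closed (T : finType) (e : rel T) (p y1 y2 : T) :
  y1 <> y2 -> Eb e p p y1 -> Eb e p p y2 ->
  forall r, path (Eb e p) p r -> r != [::] -> last p r != p.
Proof.
move=> ny E1 E2 r Hr rn; apply/negP => Hl.
apply: (shortcut (Tg := pred1 p) (B := fun z => Wb e p z && (z != p)) ny E1 E2 _ _ _ Hr rn Hl).
- move=> y Ey; apply/orP; case: (eqVneq y p) => [->|yp]; [by left; rewrite /= eqxx|right].
  by case/andP: (Eb_W Ey) => _ ->.
- case: (eqVneq y1 p) => [h|h].
    exists y2; case/andP: (Eb_W E2) => _ ->; apply/eqP => h2; apply: ny; by rewrite h h2.
  by exists y1; case/andP: (Eb_W E1) => _ ->.
- move=> q Hq qn /eqP Lq z /andP [Wz zp].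
  have := lasso (q := [::]) (r := q) (z := z) (isT : path (Eb e p) p [::]) Hq _ _ Wz.
  rewrite /= Lq in_cons (negbTE zp) /=; apply=> //; by case: q qn {Hq Lq}.
Qed.

Lemma noself (T : finType) (e : rel T) (p y1 y2 : T) :
  y1 <> y2 -> Eb e p p y1 -> Eb e p p y2 -> ~~ Eb e p p p.
Proof.
move=> ny E1 E2; apply/negP => Epp.
by have := no_closed ny E1 E2 (r := [:: p]); rewrite /= Epp eqxx => /(_ isT isT).
Qed.

Definition R (T : finType) (e : rel T) (p x : T) :=
  exists q, [/\ path (Eb e p) p q, q != [::] & last p q = x].

Lemma succ (T : finType) (e : rel T) (p y1 y2 x : T) :
  y1 <> y2 -> Eb e p p y1 -> Eb e p p y2 -> R e p x -> exists y, Eb e p x y.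
Proof.
move=> ny E1 E2 [q0 [Hq0 qn0 Lq0]].
apply: NNPP => NE.
have NE' : forall y, ~~ Eb e p x y by move=> y; apply/negP => h; apply: NE; exists y.
apply: (shortcut (Tg := pred1 x) (B := fun z => Wb e p z && (z != p)) ny E1 E2 _ _ _ Hq0 qn0 (introT eqP Lq0)).
- move=> y Ey; apply/orP; case: (eqVneq y x) => [->|yx]; [by left; rewrite /= eqxx|right].
  case/andP: (Eb_W Ey) => _ -> /=.
  apply/eqP => h; move: Ey; rewrite h; apply/negP; exact: noself ny E1 E2.
- case: (eqVneq y1 p) => [h|h].
    exists y2; case/andP: (Eb_W E2) => _ ->; apply/eqP => h2; apply: ny; by rewrite h h2.
  by exists y1; case/andP: (Eb_W E1) => _ ->.
- move=> q Hq qn /eqP Lq z /andP [Wz zp].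
  have := term Hq _ Wz; rewrite Lq in_cons (negbTE zp) /=; by apply.
Qed.

Lemma min_ex (P : nat -> Prop) : (exists n, P n) -> exists m, P m /\ forall k, P k -> m <= k.
Proof.
case=> n; elim: n {-2}n (leqnn n) => [|N IH] n hn Pn.
  exists n; split => // k _; by move: hn; rewrite leqn0 => /eqP ->.
case: (classic (exists k, k < n /\ P k)) => [[k [kn Pk]]|none].
  apply: (IH k) => //; lia.
exists n; split => // k Pk; rewrite leqNgt; apply/negP => kn; apply: none; by exists k.
Qed.

Lemma last_in (T : eqType) (c : T) r : 0 < size r -> last c r \in r.
Proof. case: r => // a r _ /=; exact: mem_last. Qed.

Lemma rotw (T : Type) (E : rel T) (c d : T) u v :
  path E c (u ++ d :: v) -> last c (u ++ d :: v) = c ->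
  path E d (v ++ rcons u d) /\ last d (v ++ rcons u d) = d.
Proof.
rewrite cat_path last_cat /= => /andP [Pu /andP [Ed Pv]] Lv.
by rewrite cat_path Pv Lv rcons_path Pu Ed last_cat last_rcons.
Qed.

Lemma notuniq_split (T : eqType) (s : seq T) :
  ~~ uniq s -> exists s1 x s2 s3, s = s1 ++ x :: s2 ++ x :: s3.
Proof.
elim: s => [|a s IH] //=; rewrite negb_and negbK => /orP [as_|nu].
  case/splitPr: as_ => u v; by exists [::], a, u, v.
have [s1 [x [s2 [s3 ->]]]] := IH nu; by exists (a :: s1), x, s2, s3.
Qed.

Lemma walk_reach (T : finType) (e : rel T) (p x : T) q :
  path (Eb e p) x q -> clos_refl_trans T (Ap_edge e p) x (last x q).
Proof.
elim: q x => [|y q IH] x /=; first by move=> _; apply: rt_refl.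
case/andP => /pbP Exy /IH H; apply: rt_trans H; exact: rt_step.
Qed.

Lemma reach_walk (T : finType) (e : rel T) (p x y : T) :
  clos_refl_trans T (Ap_edge e p) x y -> exists q, path (Eb e p) x q /\ last x q = y.
Proof.
elim => [a b Eab|a|a b c _ [q1 [P1 L1]] _ [q2 [P2 L2]]].
- by exists [:: b]; split => //=; rewrite andbT; apply/pbP.
- by exists [::].
- exists (q1 ++ q2); by rewrite cat_path last_cat L1 P1 P2 L2.
Qed.

Lemma R_step (T : finType) (e : rel T) (p x y : T) : R e p x -> Eb e p x y -> R e p y.
Proof.
case=> q [Pq qn Lq] Exy; exists (rcons q y); split.
- by rewrite rcons_path Pq Lq.
- by case: q {Pq qn Lq}.
- by rewrite last_rcons.
Qed.

Lemma R_walk (T : finType) (e : rel T) (p c : T) s z :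
  R e p c -> path (Eb e p) c s -> z \in s -> R e p z.
Proof.
elim: s c => [|a s IH] c //= Rc /andP [Eca Ps]; rewrite in_cons => /orP [/eqP ->|zs].
  exact: R_step Rc Eca.
exact: IH (R_step Rc Eca) Ps zs.
Qed.

Lemma R_W (T : finType) (e : rel T) (p z : T) : R e p z -> Wb e p z.
Proof. case=> q [Pq _ <-]; exact: last_W (Wp e p) Pq. Qed.

Lemma cyc_exists (T : finType) (e : rel T) (p y1 y2 : T) :
  y1 <> y2 -> Eb e p p y1 -> Eb e p p y2 ->
  exists c r, [/\ R e p c, path (Eb e p) c r, 0 < size r & last c r = c].
Proof.
move=> ny E1 E2.
set h := fun n => iter n (nxt (Eb e p)) y1.
have RE : forall n, R e p (h n) /\ Eb e p (h n) (h n.+1).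
  elim=> [|n [IH _]].
    have R1 : R e p y1 by exists [:: y1]; rewrite /= E1.
    split => //; apply: nxtP; have [y Ey] := succ ny E1 E2 R1; by apply/existsP; exists y.
  have Rn : R e p (h n.+1).
    have [y Ey] := succ ny E1 E2 IH.
    apply: R_step IH _; apply: nxtP; by apply/existsP; exists y.
  split => //; apply: nxtP; have [y Ey] := succ ny E1 E2 Rn; by apply/existsP; exists y.
set L := map h (iota 0 #|T|.+1).
have nu : ~~ uniq L.
  apply/negP => /card_uniqP; rewrite size_map size_iota => h1.
  by have := max_card (mem L); rewrite h1 ltnn.
have [i [j [ij jL]]] := uniqPn y1 nu.
rewrite /L size_map size_iota in jL.
rewrite (nth_map 0) ?size_iota ?(ltn_trans ij) // (nth_map 0) ?size_iota //.
rewrite !nth_iota ?(ltn_trans ij) // !add0n => hij.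
exists (h i), (map h (iota i.+1 (j - i))).
have [Pc Lc] := chain (e := Eb e p) (h := h) (m := j - i) (i := i) (fun k _ => (RE k).2).
split.
- exact: (RE i).1.
- exact: Pc.
- by rewrite size_map size_iota subn_gt0.
- by rewrite Lc subnKC ?(ltnW ij).
Qed.

Theorem lemma4p8 (T : finType) (e : rel T) (p : T) :
  cfg e -> predicate_node e p ->
  (exists y1 y2, y1 <> y2 /\ Ap_edge e p p y1 /\ Ap_edge e p p y2) ->
  trivial_SCC e p (fun x => x = p) /\
  is_SCC e p (fun x => Vp e p x /\ x <> p) /\
  is_cycle (fun x => Vp e p x /\ x <> p) (Ap_edge e p).
Proof.
move=> _ _ [y1 [y2 [ny [A1 A2]]]].
have E1 : Eb e p p y1 by apply/pbP.
have E2 : Eb e p p y2 by apply/pbP.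
have C1 := no_closed ny E1 E2.
have NS := noself ny E1 E2.
have [m [[c [r [Rc Pr r0 Lr Sr]]] Hmin]] := min_ex (P := fun n => exists c r,
   [/\ R e p c, path (Eb e p) c r, 0 < size r, last c r = c & size r = n])
   (let: ex_intro c (ex_intro r (And4 a b d f)) := cyc_exists ny E1 E2 in
    ex_intro _ (size r) (ex_intro _ c (ex_intro _ r (And5 a b d f erefl)))).
have minC : forall c' r', R e p c' -> path (Eb e p) c' r' -> 0 < size r' ->
    last c' r' = c' -> size r <= size r'.
  move=> c' r' a b d f; rewrite Sr; apply: Hmin; by exists c', r'.
clear Hmin Sr m.
have cr : c \in r by rewrite -{1}Lr; apply: last_in.
have Rr : forall z, z \in r -> R e p z by move=> z; apply: R_walk Rc Pr.
have pr : forall z, z \in r -> z != p.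
  move=> z /Rr [q [Pq qn Lq]]; apply/eqP => zp; move: (C1 q Pq qn); by rewrite Lq zp eqxx.
have cover : forall z, Wb e p z -> z != p -> z \in r.
  move=> z Wz zp; apply/negPn/negP => zr.
  case: Rc => q0 [Pq0 qn0 Lq0].
  apply: (shortcut (Tg := mem r) (B := fun z => Wb e p z && (z != p) && (z \notin r))
     ny E1 E2 _ _ _ Pq0 qn0 (etrans (congr1 (fun t => t \in r) Lq0) cr)).
  - move=> y Ey; apply/orP; case: (boolP (y \in r)) => yr; [by left|right].
    case/andP: (Eb_W Ey) => _ -> /=; apply/andP; split => //.
    by apply/eqP => yp; move: Ey; rewrite yp (negbTE NS).
  - by exists z; rewrite Wz zp.
  - move=> q Pq qn dr z' /andP [/andP [Wz' z'p] z'r].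
    case/splitPr: dr Pr Lr z'r => u v Pr Lr z'r.
    have [P' L'] := rotw Pr Lr.
    have sz : 0 < size (v ++ rcons u (last p q)) by rewrite size_cat size_rcons addnS.
    have memr : (z' \in v ++ rcons u (last p q)) = (z' \in u ++ last p q :: v).
      by rewrite !mem_cat mem_rcons !in_cons; case: (z' \in u); case: (z' == _); case: (z' \in v).
    have := lasso Pq P' sz L' Wz'.
    rewrite in_cons (negbTE z'p) /= mem_cat memr (negbTE z'r) orbF; exact.
have ur : uniq r.
  apply/negPn/negP => /notuniq_split [s1 [x [s2 [s3 rE]]]].
  have xr : x \in r by rewrite rE mem_cat in_cons eqxx orbT.
  have Px : path (Eb e p) x (rcons s2 x).
    move: Pr; rewrite rE cat_path => /andP [_] /= /andP [_].
    by rewrite cat_path rcons_path => /andP [-> /= /andP [->]].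
  have := minC x (rcons s2 x) (Rr x xr) Px; rewrite size_rcons last_rcons => /(_ isT erefl).
  by rewrite rE size_cat /= size_cat /=; lia.
have F5 : forall x0 i, i < size r -> Eb e p (nth x0 r i) (nth x0 r (i.+1 %% size r)).
  move=> x0 i ir; rewrite (set_nth_default c x0 ir).
  rewrite (set_nth_default c x0) ?ltn_pmod //.
  case: (ltngtP i.+1 (size r)) => h.
  - rewrite modn_small //; by move/(pathP c): Pr => /(_ _ h).
  - by rewrite ltnS leqNgt ir in h.
  - rewrite h modnn; move/(pathP c): Pr => /(_ _ r0) /=.
    suff -> : nth c r i = c by [].
    have -> : i = (size r).-1 by rewrite -h.
    by rewrite nth_last.
have F4 : forall x y, Eb e p x y -> x \in r -> y \in r ->
    y = nth x r ((index x r).+1 %% size r).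
  move=> x y Exy xr yr.
  have Rx := Rr x xr.
  case/splitPr: xr Pr Lr ur yr r0 minC => u v Pr Lr ur yr r0 minC.
  have [P' L'] := rotw Pr Lr.
  have yr' : y \in v ++ rcons u x.
    move: yr; rewrite !mem_cat mem_rcons !in_cons.
    by case: (y \in u); case: (y == _); case: (y \in v).
  have hd : y = head x (v ++ rcons u x).
    have szr : size (u ++ x :: v) = size (v ++ rcons u x).
      by rewrite !size_cat size_rcons /=; lia.
    move: szr; case/splitPr: yr' P' L' => t1 t2 P' L' szr.
    case: t1 P' L' szr => [|a t1] P' L' szr //.
    have Pc : path (Eb e p) x (y :: t2).
      rewrite /= Exy /=; move: P'; by rewrite cat_path => /andP [_ /andP [_]].
    have := minC x (y :: t2) Rx Pc isT.
    rewrite last_cat /= in L'; move/(_ L'); rewrite szr /= size_cat /=; lia.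
  have xu : x \notin u.
    by move: ur; rewrite cat_uniq /= => /and3P [_ /norP [] ].
  rewrite index_cat (negbTE xu) /= eqxx addn0 hd size_cat /=.
  case: v {P' L' yr' hd Pr Lr ur yr r0 minC} => [|b v] /=.
    rewrite addn1 modnn; case: u {xu} => //.
  rewrite modn_small; last by lia.
  by rewrite nth_cat ltnNge leqnSn /= subSnn.
have reach_r : forall x y, x \in r -> y \in r -> clos_refl_trans T (Ap_edge e p) x y.
  move=> x y xr yr.
  case/splitPr: xr Pr Lr yr => u v Pr Lr yr.
  have [P' _] := rotw Pr Lr.
  have yr' : y \in v ++ rcons u x.
    move: yr; rewrite !mem_cat mem_rcons !in_cons.
    by case: (y \in u); case: (y == _); case: (y \in v).
  case/splitPr: yr' P' => t1 t2 P'.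
  have Pw : path (Eb e p) x (rcons t1 y).
    move: P'; rewrite cat_path rcons_path => /andP [-> /= /andP [-> _]] //.
  by have := walk_reach Pw; rewrite last_rcons.
have Wiff : forall z, Vp e p z /\ z <> p <-> z \in r.
  move=> z; split.
    by case=> Vz zp; apply: cover; [apply/pbP | apply/eqP].
  move=> zr; split; first by apply/pbP; apply: R_W; apply: Rr.
  by apply/eqP; apply: pr.
split; [split; [split|] | split; [split|]].
- by exists p.
- split; first by move=> x ->; apply/pbP; apply: Wp.
  split; first by move=> x y -> ->; apply: rt_refl.
  move=> x y -> Vy Rpy Ryp; apply: NNPP => yp.
  have [q1 [P1 L1]] := reach_walk Rpy.
  have [q2 [P2 L2]] := reach_walk Ryp.
  have q1n : q1 != [::] by case: q1 P1 L1 {Rpy} => //= _ h; case: yp.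
  move: (C1 (q1 ++ q2)); rewrite cat_path P1 L1 P2 last_cat L1 L2 eqxx.
  by case: q1 q1n {P1 L1} => // a q1 _; move/(_ isT isT).
- move=> x y -> -> h; have : Eb e p p p by apply/pbP.
  by rewrite (negbTE NS).
- by exists c; apply/Wiff.
- split; first by move=> x [].
  split; first by move=> x y /Wiff xr /Wiff yr; apply: reach_r.
  move=> x y /Wiff xr Vy Rxy Ryx; split => // yp.
  have [q [Pq Lq]] := reach_walk Rxy.
  have [q0 [Pq0 qn0 Lq0]] := Rr x xr.
  move: (C1 (q0 ++ q)); rewrite cat_path Pq0 Lq0 Pq last_cat Lq0 Lq yp eqxx.
  by case: q0 qn0 {Pq0 Lq0} => // a q0 _; move/(_ isT isT).
- exists r; split => //; split => //; split; first exact: Wiff.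
  move=> x y /Wiff xr /Wiff yr; split.
    move/pbP => Exy; exists (index x r); split; first by rewrite index_mem.
    by split; [rewrite nth_index | apply: F4].
  case=> i [ir [hx hy]]; apply/pbP; rewrite hy {1}hx; exact: F5.
Qed.
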